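(* There is a constant $c_2\in(0,\infty)$ such that for all $\beta\in(0,\infty)$, $\Delta\in(0,1)$, even $L\ge2$, $\theta^\star\in[0,2\pi)$ and $\alpha\in\{1,2,3\}$: if $\widetilde\chi_{\Delta,L}(\boldsymbol\theta)=1$ and $\tilde{\boldsymbol\theta}=(\tilde\theta_{\boldsymbol r})$ is obtained by setting $\tilde\theta_{\boldsymbol r}=\theta_{\boldsymbol r}$ for $\boldsymbol r$ with even $\alpha$-th coordinate and $\tilde\theta_{\boldsymbol r}=2\phi_\alpha-\theta_{\boldsymbol r}$ for $\boldsymbol r$ with odd $\alpha$-th coordinate (all $\tilde\theta_{\boldsymbol r}$ taken as real representatives within $\Delta$ of $\theta^\star$), then $$\bigl|\beta\mathscr H_L(\boldsymbol\theta)-\widetilde{\mathscr I}_{L,\alpha}(\tilde{\boldsymbol\theta})\bigr|\le c_2(\beta J)\Delta^3L^3.$$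
   Context: $\mathscr H_L(\boldsymbol\theta)=\frac J2\sum_{\boldsymbol r\in\mathbb T_L}\sum_{\gamma=1}^3(\cos(\theta_{\boldsymbol r}-\phi_\gamma)-\cos(\theta_{\boldsymbol r+\hat{\mathrm e}_\gamma}-\phi_\gamma))^2$ with $\phi_1=0,\phi_2=\tfrac{2\pi}3,\phi_3=-\tfrac{2\pi}3$, $J>0$. $\widetilde\chi_{\Delta,L}$ is the indicator that $|\theta_{\boldsymbol r}-\theta^\star|<\Delta$ (mod $2\pi$) for $\boldsymbol r$ with even $\alpha$-th coordinate and $|\theta_{\boldsymbol r}-(2\phi_\alpha-\theta^\star)|<\Delta$ for $\boldsymbol r$ with odd $\alpha$-th coordinate. With $q_1=\sin^2\theta^\star$, $q_2=\sin^2(\theta^\star-\tfrac{2\pi}3)$, $q_3=\sin^2(\theta^\star+\tfrac{2\pi}3)$, let $q^{(\alpha)}_{\gamma,\boldsymbol r}=q_\gamma$ if the $\alpha$-th coordinate of $\boldsymbol r$ is even, while for odd $\alpha$-th coordinate $q^{(\alpha)}_{\alpha,\boldsymbol r}=q_\alpha$ and the two values $q_{\gamma'}$, $\gamma'\ne\alpha$, are interchanged. Define $\widetilde{\mathscr I}_{L,\alpha}(\boldsymbol\theta)=\frac{\beta J}2\sum_{\boldsymbol r\in\mathbb T_L}\sum_{\gamma=1}^3q^{(\alpha)}_{\gamma,\boldsymbol r}(\theta_{\boldsymbol r}-\theta_{\boldsymbol r+\hat{\mathrm e}_\gamma})^2$. *)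

(* Defs.v *)
From HB Require Import structures.
From mathcomp Require Import all_boot all_order all_algebra.
From mathcomp Require Import all_classical all_reals all_analysis.
Set Implicit Arguments. Unset Strict Implicit. Unset Printing Implicit Defensive.
Import Order.TTheory GRing.Theory Num.Theory.
Local Open Scope ring_scope.

(* Sites of the torus T_L = (Z/LZ)^3; coordinate index gamma in {1,2,3}
   is represented by 'I_3 = {0,1,2} (gamma = k+1). *)
Definition site (L : nat) := {ffun 'I_3 -> 'I_L}.

Definition shift (L : nat) (r : site L) (g : 'I_3) : site L :=
  [ffun k => if k == g then ordS (r k) else r k].

Definition phi {R : realType} (g : 'I_3) : R :=
  if val g == 0%N then 0
  else if val g == 1%N then 2 * pi / 3 else - (2 * pi / 3).

Definition near_mod {R : realType} (x a D : R) : Prop :=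
  exists k : int, `|x - a - k%:~R * (2 * pi)| < D.

Definition ham {R : realType} (J : R) (L : nat) (th : site L -> R) : R :=
  J / 2 * \sum_(r : site L) \sum_(g : 'I_3)
     (cos (th r - phi g) - cos (th (shift r g) - phi g)) ^+ 2.

Definition chi_tilde {R : realType} (D : R) (L : nat) (ths : R) (a : 'I_3)
  (th : site L -> R) : Prop :=
  forall r : site L,
    if odd (r a) then near_mod (th r) (2 * phi a - ths) D
    else near_mod (th r) ths D.

Definition qg {R : realType} (ths : R) (g : 'I_3) : R := (sin (ths - phi g)) ^+ 2.

(* the index gamma' different from both a and g (for a <> g) *)
Definition other_idx (a g : 'I_3) : 'I_3 := inord (3 - a - g).

Definition q_alpha {R : realType} (ths : R) (L : nat) (a : 'I_3) (g : 'I_3)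
  (r : site L) : R :=
  if odd (r a) && (g != a) then qg ths (other_idx a g) else qg ths g.

Definition I_tilde {R : realType} (beta J : R) (L : nat) (ths : R) (a : 'I_3)
  (th : site L -> R) : R :=
  beta * J / 2 * \sum_(r : site L) \sum_(g : 'I_3)
     q_alpha ths a g r * (th r - th (shift r g)) ^+ 2.

(* tht is the reflected configuration theta~, with real representatives
   within D of theta* *)
Definition reflected_rep {R : realType} (D : R) (L : nat) (ths : R) (a : 'I_3)
  (th tht : site L -> R) : Prop :=
  forall r : site L,
    `|tht r - ths| < D /\
    if odd (r a) then exists k : int, tht r = 2 * phi a - th r + k%:~R * (2 * pi)
    else exists k : int, tht r = th r + k%:~R * (2 * pi).

(* Main.v *)
Require Import Defs.
From HB Require Import structures.
From mathcomp Require Import all_boot all_order all_algebra.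
From mathcomp Require Import all_classical all_reals all_analysis.
From mathcomp Require Import ring lra.
Import Order.TTheory GRing.Theory Num.Theory numFieldNormedType.Exports.
Local Open Scope ring_scope.
Set Implicit Arguments.
Unset Strict Implicit.

Section S.
Variable R : realType.

Lemma lip_le (f df : R -> R) (M x y : R) :
  (forall z : R, is_derive z (1:R) f (df z)) ->
  x <= y -> (forall z, x <= z <= y -> `|df z| <= M) ->
  `|f y - f x| <= M * (y - x).
Proof.
move=> fd xy dM.
have fc : forall z : R, {for z, continuous f}.
  by move=> z; apply/differentiable_continuous/derivable1_diffP; exact: (@ex_derive _ _ _ _ _ _ _ (fd z)).
have [c cxy ->] : exists2 c, c \in `[x, y]%R & f y - f x = df c * (y - x).
  by apply: MVT_segment xy (fun z _ => fd z) _; apply: continuous_subspaceT => z; exact: fc.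
rewrite normrM (@ger0_norm _ (y - x)) ?subr_ge0 //.
apply: ler_wpM2r; first by rewrite subr_ge0.
apply: dM; by rewrite in_itv /= in cxy.
Qed.

Lemma sin_lip (x y : R) : `|sin x - sin y| <= `|x - y|.
Proof.
wlog xy : x y / y <= x.
  move=> H; case: (leP y x) => [/H//|/ltW /H]; by rewrite distrC (distrC y).
have := @lip_le sin cos 1 y x (fun z => is_derive_sin z) xy.
rewrite mul1r (ger0_norm (_ : 0 <= x - y)) ?subr_ge0 //; apply => z _.
exact: cos_max.
Qed.

Lemma cos_lin (x y t D : R) : `|x - t| < D -> `|y - t| < D ->
  `|cos x - cos y + sin t * (x - y)| <= D * `|x - y|.
Proof.
wlog xy : x y / y <= x.
  move=> H hx hy; case: (leP y x) => [yx|/ltW yx]; first exact: H.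
  have := H y x yx hy hx.
  by rewrite (distrC y x) -[X in _ -> X <= _]normrN; congr (`|_| <= _); ring.
move=> hx hy.
have := @lip_le (fun z => cos z + sin t * z) (fun z => - sin z + sin t) D y x _ xy.
rewrite (@ger0_norm _ (x - y)) ?subr_ge0 //.
have -> : cos x + sin t * x - (cos y + sin t * y) = cos x - cos y + sin t * (x - y).
  by rewrite mulrBr; lra.
apply.
- move=> z. apply: is_deriveD. have := @is_deriveZ _ _ _ id (sin t) z 1 1 (is_derive_id z 1). by rewrite scaler1.
- move=> z /andP[yz zx]; rewrite addrC.
  apply: le_trans (sin_lip _ _) _.
  move: hx hy; rewrite !ltr_norml ler_norml => /andP[h1 h2] /andP[h3 h4].
  apply/andP; split; lra.
Qed.

Lemma sq_bound (x y t D : R) : D <= 1 -> `|x - t| < D -> `|y - t| < D ->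
  `|(cos x - cos y) ^+ 2 - sin t ^+ 2 * (x - y) ^+ 2| <= 12 * D ^+ 3.
Proof.
move=> D1 hx hy.
have he := @cos_lin x y t D hx hy.
have D0 : 0 <= D by have := normr_ge0 (x - t); lra.
have hs : `|sin t| <= 1 := sin_max t.
have hh : `|x - y| <= 2 * D.
  move: hx hy; rewrite !ltr_norml ler_norml => /andP[h1 h2] /andP[h3 h4].
  apply/andP; split; lra.
move: he hh hs.
set d := cos x - cos y; set h := x - y; set s := sin t => he hh hs.
have -> : d ^+ 2 - s ^+ 2 * h ^+ 2 = (d + s * h) * ((d + s * h) - 2 * s * h) by ring.
rewrite normrM.
have h1 : `|(d + s * h) - 2 * s * h| <= 3 * `|h|.
  apply: le_trans (ler_normB _ _) _.
  rewrite -mulrA normrM (normrM s) ger0_norm //.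
  have : `|s| * `|h| <= `|h| by rewrite ler_piMl.
  have : D * `|h| <= `|h| by rewrite ler_piMl.
  lra.
apply: le_trans (ler_pM _ _ he h1) _ => //.
have : 0 <= `|h| := normr_ge0 h.
move: hh; set u := `|h| => hh u0.
have uu : u * u <= (2 * D) * (2 * D) by apply: ler_pM.
have : 0 <= D * ((2 * D) * (2 * D) - u * u) by apply: mulr_ge0 => //; rewrite subr_ge0.
rewrite !exprS expr0 => H. have -> : D * u * (3 * u) = 3 * (D * (u * u)) by ring. rewrite mulrBr in H. lra.
Qed.

Lemma per_int (f : R -> R) (p x : R) : (forall y, f (y + p) = f y) ->
  forall k : int, f (x + k%:~R * p) = f x.
Proof.
move=> hp k.
have hn : forall n : nat, forall y, f (y + n%:R * p) = f y.
  elim => [|n IH] y; first by rewrite mul0r addr0.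
  by rewrite -addn1 natrD mulrDl mul1r addrA hp IH.
case: k => n; first by rewrite hn.
rewrite NegzE mulrNz mulNr.
by have := hn n.+1 (x - n.+1%:R * p); rewrite subrK => <-.
Qed.

Lemma cos_per (x : R) (k : int) : cos (x + k%:~R * (2 * pi)) = cos x.
Proof. apply: per_int => y; rewrite mulr_natl; exact: cosD2pi. Qed.

Lemma sin_per (x : R) (k : int) : sin (x + k%:~R * (2 * pi)) = sin x.
Proof. apply: per_int => y; rewrite mulr_natl; exact: sinD2pi. Qed.

Lemma val_inord3 (n : nat) : (n < 3)%N -> val (inord n : 'I_3) = n.
Proof. exact: inordK. Qed.

Lemma phi_refl (a g : 'I_3) : g != a ->
  exists k : int, 2 * phi a - phi g = phi (other_idx a g) + k%:~R * (2 * pi) :> R.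
Proof.
case: a => [[|[|[|a']]] Ha] //; case: g => [[|[|[|g']]] Hg] //;
  rewrite /other_idx /phi => _; rewrite !val_inord3 //=.
all: try (by exists 0; rewrite mul0r; lra).
all: try (by exists 1; rewrite mul1r; lra).
all: try (by exists (-1); rewrite mulN1r; lra).
Qed.
End S.

Definition psi {R : realType} (b : bool) (a g : 'I_3) : R :=
  if b then 2 * phi a - phi g else phi g.

Lemma site_cos {R : realType} (D ths : R) L (a g : 'I_3) (th tht : site L -> R)
  (s : site L) : reflected_rep D ths a th tht ->
  cos (th s - phi g) = cos (tht s - psi (odd (s a)) a g).
Proof.
move=> /(_ s) [_]; rewrite /psi; case: (odd (s a)) => -[k ->].
- have -> : 2 * phi a - th s + k%:~R * (2 * pi) - (2 * phi a - phi g) = - (th s - phi g) + k%:~R * (2 * pi)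
    by ring.
  by rewrite cos_per cosN.
- have -> : th s + k%:~R * (2 * pi) - phi g = (th s - phi g) + k%:~R * (2 * pi) by ring.
  by rewrite cos_per.
Qed.

Lemma psi_aa {R : realType} b (a : 'I_3) : psi b a a = phi a :> R.
Proof. by rewrite /psi; case: b => //; ring. Qed.

Lemma q_psi {R : realType} (ths : R) L (a g : 'I_3) (r : site L) :
  q_alpha ths a g r = sin (ths - psi (odd (r a)) a g) ^+ 2.
Proof.
rewrite /q_alpha /qg /psi; case: (odd (r a)) => //=.
case: (eqVneq g a) => [->|hga] /=.
  by have -> : 2 * phi a - phi a = phi a :> R by ring.
have [k ->] := @phi_refl R a g hga.
have -> : ths - (phi (other_idx a g) + k%:~R * (2 * pi)) =
   (ths - phi (other_idx a g)) + (- k)%:~R * (2 * pi) by rewrite mulrNz; ring.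
by rewrite sin_per.
Qed.

Lemma psi_shift {R : realType} L (r : site L) (a g : 'I_3) :
  psi (odd ((Defs.shift r g) a)) a g = psi (odd (r a)) a g :> R.
Proof.
case: (eqVneq g a) => [->|hga]; first by rewrite !psi_aa.
by rewrite /Defs.shift ffunE eq_sym (negbTE hga).
Qed.

Lemma term_bound {R : realType} (D ths : R) L (a : 'I_3) (th tht : site L -> R)
  (r : site L) (g : 'I_3) : D <= 1 -> reflected_rep D ths a th tht ->
  `|(cos (th r - phi g) - cos (th (Defs.shift r g) - phi g)) ^+ 2
    - q_alpha ths a g r * (tht r - tht (Defs.shift r g)) ^+ 2| <= 12 * D ^+ 3.
Proof.
move=> D1 hrep.
rewrite (@site_cos R D ths L a g th tht r hrep) (@site_cos R D ths L a g th tht (Defs.shift r g) hrep) psi_shift q_psi.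
set ps := psi _ a g.
have [h1 _] := hrep r; have [h2 _] := hrep (Defs.shift r g).
have := @sq_bound R (tht r - ps) (tht (Defs.shift r g) - ps) (ths - ps) D D1.
have -> : tht r - ps - (ths - ps) = tht r - ths by ring.
have -> : tht (Defs.shift r g) - ps - (ths - ps) = tht (Defs.shift r g) - ths by ring.
have -> : tht r - ps - (tht (Defs.shift r g) - ps) = tht r - tht (Defs.shift r g) by ring.
by move=> /(_ h1 h2).
Qed.

Lemma sum_bound {R : realType} L (F : site L -> 'I_3 -> R) (M : R) :
  (forall r g, `|F r g| <= M) ->
  `|\sum_(r : site L) \sum_(g : 'I_3) F r g| <= (L ^ 3)%:R * (3 * M).
Proof.
move=> hF.
have hr : forall r, `|\sum_(g : 'I_3) F r g| <= 3 * M.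
  move=> r; apply: le_trans (ler_norm_sum _ _ _) _.
  rewrite (_ : 3 * M = \sum_(g : 'I_3) M); last by rewrite sumr_const card_ord mulr_natl.
  by apply: ler_sum => g _; exact: hF.
apply: le_trans (ler_norm_sum _ _ _) _.
rewrite (_ : (L ^ 3)%:R * (3 * M) = \sum_(r : site L) (3 * M)); last first.
  by rewrite sumr_const /site card_ffun !card_ord mulr_natl.
by apply: ler_sum => r _; exact: hr.
Qed.

Theorem lemma4p6 (R : realType) :
  exists c2 : R, 0 < c2 /\
  forall (beta J D : R) (L : nat) (ths : R) (a : 'I_3) (th tht : site L -> R),
    0 < beta -> 0 < J -> 0 < D -> D < 1 ->
    ~~ odd L -> (2 <= L)%N ->
    0 <= ths -> ths < 2 * pi ->
    chi_tilde D ths a th ->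
    reflected_rep D ths a th tht ->
    `|beta * ham J th - I_tilde beta J ths a tht|
      <= c2 * (beta * J) * D ^+ 3 * (L%:R) ^+ 3.
Proof.
exists 18; split; first lra.
move=> beta J D L ths a th tht b0 J0 D0 D1 _ _ _ _ _ hrep.
have key := fun r g => @term_bound R D ths L a th tht r g (ltW D1) hrep.
rewrite /ham /I_tilde.
set S1 := \sum_(r : site L) _; set S2 := \sum_(r : site L) _.
have -> : beta * (J / 2 * S1) - beta * J / 2 * S2 = beta * J / 2 * (S1 - S2) by ring.
rewrite /S1 /S2 -sumrB.
under eq_bigr do rewrite -sumrB.
have hb := sum_bound key.
have bJ : 0 <= beta * J / 2 by apply: divr_ge0 => //; apply: mulr_ge0; lra.
rewrite normrM (ger0_norm bJ).
apply: le_trans (ler_wpM2l bJ hb) _.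
rewrite natrX.
have : 0 <= beta * J * D ^+ 3 * L%:R ^+ 3.
  by apply: mulr_ge0; [apply: mulr_ge0; [apply: mulr_ge0; lra|apply: exprn_ge0; lra]|apply: exprn_ge0; exact: ler0n].
move=> _.
rewrite le_eqVlt; apply/orP; left; apply/eqP.
move: (L%:R ^+ 3) (D ^+ 3) => u v.
by field.
Qed.
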